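(* $\pi_3(\tau)([u])=-[L]$ in $\pi_3(SO)$, where $[u]\in\pi_3(U)$.
   Context: Identify $\mathbb{H}=\mathbb{R}^4=\mathbb{C}^2$ via $q=a+bi+cj+dk=z+wj\leftrightarrow(a,b,c,d)\leftrightarrow(z,w)$ with $z=a+bi$, $w=c+di$, and $S^3$ with the unit quaternions. $u:S^3\to U(2)$, $u_q=\begin{pmatrix}z&-\bar w\\ w&\bar z\end{pmatrix}$ for $q=z+wj$ (the complex matrix of right multiplication $p\mapsto pq$). $L:S^3\to SO(4)$ sends $q$ to the real matrix of left multiplication $p\mapsto qp$. These are composed with the stable inclusions $U(2)\subset U$, $SO(4)\subset SO$. $\tau:U\to SO$ is the map replacing each complex entry $a+bi$ by the real block $\begin{pmatrix}a&-b\\ b&a\end{pmatrix}$. It is known that $\pi_3(U)=\mathbb{Z}\langle[u]\rangle$ and $\pi_3(SO)=\mathbb{Z}\langle[L]\rangle$. *)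

(* Defs.v *)
From HB Require Import structures.
From mathcomp Require Import all_boot all_order all_algebra.
From mathcomp Require Import all_classical all_reals all_analysis.
From mathcomp Require Import complex.
Set Implicit Arguments. Unset Strict Implicit. Unset Printing Implicit Defensive.
Import Order.TTheory GRing.Theory Num.Theory.
Import numFieldNormedType.Exports.
Local Open Scope ring_scope.
Local Open Scope classical_set_scope.

(* Quaternions q = a + b i + c j + d k are represented by their real
   coordinate row vectors (a, b, c, d) : 'rV[R]_4. *)
Section Quat.
Variable R : realType.

Definition qa (q : 'rV[R]_4) := q 0 (inord 0).
Definition qb (q : 'rV[R]_4) := q 0 (inord 1).
Definition qc (q : 'rV[R]_4) := q 0 (inord 2).
Definition qd (q : 'rV[R]_4) := q 0 (inord 3).

Definition mkq (a b c d : R) : 'rV[R]_4 :=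
  \row_(i < 4) [:: a; b; c; d]`_i.

(* Hamilton product (i^2 = j^2 = k^2 = ijk = -1). *)
Definition qmul (p q : 'rV[R]_4) : 'rV[R]_4 :=
  mkq (qa p * qa q - qb p * qb q - qc p * qc q - qd p * qd q)
      (qa p * qb q + qb p * qa q + qc p * qd q - qd p * qc q)
      (qa p * qc q - qb p * qd q + qc p * qa q + qd p * qb q)
      (qa p * qd q + qb p * qc q - qc p * qb q + qd p * qa q).

Definition S3 : set 'rV[R]_4 := [set q | \sum_(i < 4) q 0 i ^+ 2 = 1].

Definition qone : 'rV[R]_4 := mkq 1 0 0 0.

(* L q : the real 4x4 matrix of left multiplication p |-> q p in the basis
   1, i, j, k (column j is the coordinate vector of q * e_j). *)
Definition Lmat (q : 'rV[R]_4) : 'M[R]_4 :=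
  \matrix_(i < 4, j < 4) qmul q (delta_mx 0 j) 0 i.

(* u_q = [[z, -conj w], [w, conj z]] with q = z + w j, z = a + b i,
   w = c + d i. *)
Definition umat (q : 'rV[R]_4) : 'M[R[i]]_2 :=
  let z : R[i] := (qa q +i* qb q)%C in
  let w : R[i] := (qc q +i* qd q)%C in
  \matrix_(i < 2, j < 2)
    match val i, val j with
    | 0, 0 => z | 0, _ => - (w^*)%C | _, 0 => w | _, _ => (z^*)%C end.

(* tau : replaces each complex entry x + y i by the real block
   [[x, -y], [y, x]]; real index 2 a + r corresponds to complex index a
   and to the real (r = 0) / imaginary (r = 1) part. *)
Definition realify (x : R[i]) : 'M[R]_2 :=
  \matrix_(r < 2, s < 2)
    match val r, val s with
    | 0, 0 => complex.Re x | 0, _ => - complex.Im x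
    | _, 0 => complex.Im x | _, _ => complex.Re x end.

Definition tau n (A : 'M[R[i]]_n.+1) : 'M[R]_(n.+1 * 2) :=
  \matrix_(i < n.+1 * 2, j < n.+1 * 2)
    realify (A (inord (i %/ 2)) (inord (j %/ 2))) (inord (i %% 2)) (inord (j %% 2)).

Definition stab n k (A : 'M[R]_n) : 'M[R]_(n + k) := block_mx A 0 0 1%:M.

Definition inSO N (A : 'M[R]_N) : Prop := A^T *m A = 1%:M /\ \det A = 1.

(* Two based maps f, g : S^3 -> SO(4) represent the same element of the
   stable group pi_3(SO) iff, for some k, their stabilisations in SO(4+k)
   are based-homotopic through maps S^3 -> SO(4+k). *)
Definition stably_based_homotopic (f g : 'rV[R]_4 -> 'M[R]_4) : Prop :=
  exists k : nat, exists H : R * 'rV[R]_4 -> 'M[R]_(4 + k),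
    {within `[0, 1] `*` S3, continuous H} /\
    (forall q, S3 q -> H (0, q) = stab k (f q)) /\
    (forall q, S3 q -> H (1, q) = stab k (g q)) /\
    (forall t, t \in `[0, 1] -> H (t, qone) = 1%:M) /\
    (forall t q, t \in `[0, 1] -> S3 q -> inSO (H (t, q))).

End Quat.

(* Main.v *)
Require Import Defs.
From HB Require Import structures.
From mathcomp Require Import all_boot all_order all_algebra.
From mathcomp Require Import all_classical all_reals all_analysis.
From mathcomp Require Import complex.
From mathcomp Require Import ring lra.
Import Order.TTheory GRing.Theory Num.Theory.
Import numFieldNormedType.Exports.
Local Open Scope ring_scope.
Local Open Scope classical_set_scope.

Lemma mx_cont (R : realType) (T : topologicalType) m n (f : T -> 'M[R]_(m,n)) :
  (forall i j, continuous (fun x => f x i j)) -> continuous f.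
Proof.
move=> H x A [P PM sPA].
have : \forall y \near x, forall ij : 'I_m * 'I_n, P ij.1 ij.2 (f y ij.1 ij.2).
  apply: filter_forall => -[i j] /=.
  exact: (H i j x _ (PM i j)).
apply: filterS => y Hy; apply: sPA => i j; exact: (Hy (i, j)).
Qed.

Section S.
Variable R : realType.
Definition Rq (q : 'rV[R]_4) : 'M[R]_4 :=
  let a := qa q in let b := qb q in let c := qc q in let d := qd q in
  \matrix_(i<4,j<4) nth 0 (nth [::] [:: [::a;-b;-c;-d]; [::b;a;d;-c]; [::c;-d;a;b]; [::d;c;-b;a]] i) j.
Definition Lq (q : 'rV[R]_4) : 'M[R]_4 :=
  let a := qa q in let b := qb q in let c := qc q in let d := qd q in
  \matrix_(i<4,j<4) nth 0 (nth [::] [:: [::a;-b;-c;-d]; [::b;a;-d;c]; [::c;d;a;-b]; [::d;-c;b;a]] i) j.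
Definition Cm : 'M[R]_4 :=
  \matrix_(i<4,j<4) nth 0 (nth [::] [:: [::1;0;0;0]; [::0;-1;0;0]; [::0;0;-1;0]; [::0;0;0;-1]] i) j.
Definition sq (q : 'rV[R]_4) := qa q ^+ 2 + qb q ^+ 2 + qc q ^+ 2 + qd q ^+ 2.

Lemma tauE q : tau (umat q) = Rq q.
Proof.
apply/matrixP => i j; rewrite !mxE.
case: i => [[|[|[|[|i]]]] Hi] //; case: j => [[|[|[|[|j]]]] Hj] //;
  rewrite /= ?mxE /= ?inordK //= ?mxE /= ?inordK //=.
all: try (rewrite /= ?mxE /=); idtac.
all: rewrite ?opprK //.
Qed.

Lemma LmatE q : Lmat q = Lq q.
Proof.
apply/matrixP => i j; rewrite !mxE.
case: i => [[|[|[|[|i]]]] Hi] //; case: j => [[|[|[|[|j]]]] Hj] //;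
  rewrite /qmul /mkq ?mxE /= /qa /qb /qc /qd ?mxE /=.
all: rewrite -?val_eqE /= ?inordK //=.
all: ring.
Qed.

Lemma sum4 (F : 'I_4 -> R) : \sum_(i<4) F i = F (inord 0) + F (inord 1) + F (inord 2) + F (inord 3).
Proof.
rewrite !big_ord_recl big_ord0 addr0 !addrA.
by congr (_+_+_+_); congr F; apply/val_inj; rewrite /= inordK.
Qed.

Lemma S3E q : S3 q -> sq q = 1.
Proof. by rewrite /S3 /= sum4. Qed.

Lemma RtR q : sq q = 1 -> (Rq q)^T *m Rq q = 1%:M.
Proof.
rewrite /sq => H; apply/matrixP => i j; rewrite !mxE sum4 !mxE.
case: i => [[|[|[|[|i]]]] Hi] //; case: j => [[|[|[|[|j]]]] Hj] //;
  rewrite /= ?inordK //= ?mxE /=; rewrite -?[RHS]H; ring.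
Qed.

Lemma LCRC q : sq q = 1 -> Lq q *m (Cm *m Rq q *m Cm^T) = 1%:M.
Proof.
rewrite /sq => H; apply/matrixP => i j; rewrite !mxE sum4 !mxE !sum4 !mxE !sum4 !mxE.
case: i => [[|[|[|[|i]]]] Hi] //; case: j => [[|[|[|[|j]]]] Hj] //;
  rewrite /= ?inordK //= ?mxE /=; rewrite -?[RHS]H; ring.
Qed.

Lemma detR q : \det (Rq q) = sq q ^+ 2.
Proof.
do 4 rewrite ?(expand_det_row _ ord0) ?big_ord_recr ?big_ord0 /cofactor.
rewrite ?det_mx00 ?mxE /= /sq.
ring.
Qed.
End S.

Section S2.
Variable R : realType.
Definition Pm (t : R) : 'M[R]_(4 + 1) :=
  let c := cos (pi * t) in let s := sin (pi * t) in
  \matrix_(i<4 + 1,j<4 + 1) nth 0 (nth [::] [:: [::1;0;0;0;0]; [::0;c;-s;0;0]; [::0;s;c;0;0]; [::0;0;0;c;-s]; [::0;0;0;s;c]] i) j.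

Lemma sum5 (F : 'I_(4+1) -> R) : \sum_(i<4+1) F i = F (inord 0) + F (inord 1) + F (inord 2) + F (inord 3) + F (inord 4).
Proof.
rewrite !big_ord_recl big_ord0 addr0 !addrA.
by congr (_+_+_+_+_); congr F; apply/val_inj; rewrite /= inordK.
Qed.

Lemma PtP t : (Pm t)^T *m Pm t = 1%:M.
Proof.
have H := cos2Dsin2 (pi * t).
apply/matrixP => i j; rewrite !mxE sum5 !mxE.
case: i => [[|[|[|[|[|i]]]]] Hi] //; case: j => [[|[|[|[|[|j]]]]] Hj] //;
  rewrite /= ?inordK //= ?mxE /=; first [ring | rewrite -[RHS]H; ring].
Qed.

Lemma P0 : Pm 0 = 1%:M.
Proof.
apply/matrixP => i j; rewrite !mxE mulr0 cos0 sin0 oppr0.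
by case: i => [[|[|[|[|[|i]]]]] Hi] //; case: j => [[|[|[|[|[|j]]]]] Hj].
Qed.

Lemma P1 : Pm 1 = block_mx (Cm R) 0 0 (-1%:M).
Proof.
apply/matrixP => i j; rewrite [LHS]mxE mulr1 cospi sinpi oppr0.
case: (split_ordP i) => i' ->; case: (split_ordP j) => j' ->;
  rewrite ?block_mxEul ?block_mxEur ?block_mxEdl ?block_mxEdr !mxE /=.
- by case: i' => [[|[|[|[|k]]]] Hk] //; case: j' => [[|[|[|[|l]]]] Hl].
- by case: i' => [[|[|[|[|k]]]] Hk] //; case: j' => [[|[|l]] Hl].
- by case: i' => [[|[|k]] Hk] //; case: j' => [[|[|[|[|l]]]] Hl].
- by case: i' => [[|[|k]] Hk] //; case: j' => [[|[|l]] Hl].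
Qed.
End S2.
Section S3.
Variable R : realType.
Variable T : topologicalType.

Lemma cont_sum (I : Type) (r : seq I) (F : I -> T -> R) :
  (forall k, continuous (F k)) -> continuous (fun x => \sum_(k <- r) F k x).
Proof.
move=> H; elim: r => [|k r IH].
  under eq_fun do rewrite big_nil. exact: cst_continuous.
under eq_fun do rewrite big_cons.
by move=> x; apply: continuousD; [apply: H | apply: IH].
Qed.

Lemma cont_mul m n p (A : T -> 'M[R]_(m,n)) (B : T -> 'M[R]_(n,p)) :
  (forall i j, continuous (fun x => A x i j)) ->
  (forall i j, continuous (fun x => B x i j)) ->
  forall i j, continuous (fun x => (A x *m B x) i j).
Proof.
move=> HA HB i j.
under eq_fun do rewrite mxE.
apply: cont_sum => k x; apply: continuousM; [apply: HA | apply: HB].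
Qed.

Lemma cont_tr m n (A : T -> 'M[R]_(m,n)) :
  (forall i j, continuous (fun x => A x i j)) ->
  forall i j, continuous (fun x => (A x)^T i j).
Proof. by move=> HA i j; under eq_fun do rewrite mxE; apply: HA. Qed.
End S3.

Lemma cont_fst (A B : topologicalType) : continuous (fun p : A * B => p.1).
Proof. move=> [a b]. have := @cvg_fst _ _ (nbhs a) (nbhs b) _. apply. Qed.
Lemma cont_snd (A B : topologicalType) : continuous (fun p : A * B => p.2).
Proof. move=> [a b]. have := @cvg_snd _ _ (nbhs a) (nbhs b) _. apply. Qed.
Section S4.
Variable R : realType.
Lemma cont_coord k : continuous (fun p : R * 'rV[R]_4 => p.2 0 k).
Proof.
move=> x; apply: (@continuous_comp _ _ _ (fun p : R * 'rV[R]_4 => p.2) (fun M : 'M[R]_(1,4) => M 0 k)).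
  exact: cont_snd.
exact: coord_continuous.
Qed.
Lemma cont_cos : continuous (fun p : R * 'rV[R]_4 => cos (pi * p.1)).
Proof.
move=> x; apply: (@continuous_comp _ _ _ (fun p : R * 'rV[R]_4 => pi * p.1) (@cos R)); last exact: continuous_cos.
apply: continuousM; [exact: cst_continuous | exact: cont_fst].
Qed.
Lemma cont_sin : continuous (fun p : R * 'rV[R]_4 => sin (pi * p.1)).
Proof.
move=> x; apply: (@continuous_comp _ _ _ (fun p : R * 'rV[R]_4 => pi * p.1) (@sin R)); last exact: continuous_sin.
apply: continuousM; [exact: cst_continuous | exact: cont_fst].
Qed.
End S4.

Arguments Rq {R} q. Arguments tauE {R} q. Arguments LmatE {R} q. Arguments S3E {R q}. Arguments RtR {R q}. Arguments LCRC {R q}. Arguments detR {R} q. Arguments PtP {R} t. Arguments P0 {R}. Arguments P1 {R}. Arguments Lq {R} q. Arguments Pm {R} t. Arguments sq {R} q. Arguments Cm {R}.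
Section S5.
Variable R : realType.

Lemma contP i j : continuous (fun p : R * 'rV[R]_4 => Pm p.1 i j).
Proof.
under eq_fun do rewrite mxE.
case: i => [[|[|[|[|[|k]]]]] Hk] //; case: j => [[|[|[|[|[|l]]]]] Hl] //=;
  first [exact: cst_continuous | exact: cont_cos | exact: cont_sin |
         (move=> x; apply: continuousN; exact: cont_sin)].
Qed.

Lemma contS i j : continuous (fun p : R * 'rV[R]_4 => stab 1 (Rq p.2) i j).
Proof.
rewrite /stab; case: (split_ordP i) => i' ->; case: (split_ordP j) => j' ->.
- under eq_fun do rewrite block_mxEul mxE.
  case: i' => [[|[|[|[|k]]]] Hk] //; case: j' => [[|[|[|[|l]]]] Hl] //=;
  rewrite /qa /qb /qc /qd;
  first [exact: cont_coord | (move=> x; apply: continuousN; exact: cont_coord)].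
- under eq_fun do rewrite block_mxEur mxE. exact: cst_continuous.
- under eq_fun do rewrite block_mxEdl mxE. exact: cst_continuous.
- under eq_fun do rewrite block_mxEdr. exact: cst_continuous.
Qed.

Lemma invLq (q : 'rV[R]_4) : sq q = 1 -> invmx (Lq q) = Cm *m Rq q *m (Cm)^T.
Proof.
move=> Hq; have E := LCRC Hq; have [U _] := mulmx1_unit E.
by rewrite -[RHS](mulKmx U) E mulmx1.
Qed.

Lemma Rqone : Rq (qone R) = 1%:M.
Proof.
apply/matrixP => i j; rewrite !mxE /qa /qb /qc /qd /qone /mkq.
by case: i => [[|[|[|[|k]]]] Hk] //; case: j => [[|[|[|[|l]]]] Hl] //=;
  rewrite !mxE ?inordK //= ?oppr0.
Qed.

Lemma StS (q : 'rV[R]_4) : sq q = 1 -> (stab 1 (Rq q))^T *m stab 1 (Rq q) = 1%:M.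
Proof.
move=> Hq; rewrite /stab tr_block_mx !trmx0 trmx1 mulmx_block.
rewrite !mulmx0 !mul0mx !addr0 !add0r mulmx1 RtR //.
by rewrite -scalar_mx_block.
Qed.

Lemma PPt (t : R) : Pm t *m (Pm t)^T = 1%:M.
Proof. exact: mulmx1C (PtP t). Qed.

Lemma detP (t : R) : \det (Pm t) * \det (Pm t) = 1.
Proof. by rewrite -{1}det_tr -det_mulmx PtP det1. Qed.
End S5.

Theorem proposition4p4 (R : realType) :
  stably_based_homotopic (fun q : 'rV[R]_4 => tau (umat q))
                         (fun q : 'rV[R]_4 => invmx (Lmat q)).
Proof.
exists 1%N, (fun p : R * 'rV[R]_4 => Pm p.1 *m stab 1 (Rq p.2) *m (Pm p.1)^T).
split.
  apply: continuous_subspaceT; apply: mx_cont.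
  apply: cont_mul; last by apply: cont_tr; exact: contP.
  apply: cont_mul; [exact: contP | exact: contS].
split.
  by move=> q _ /=; rewrite P0 trmx1 mul1mx mulmx1 tauE.
split.
  move=> q Hq /=; rewrite P1 LmatE invLq ?S3E //.
  rewrite /stab tr_block_mx !trmx0 linearN /= trmx1 !mulmx_block.
  rewrite !mulmx0 !mul0mx !addr0 !add0r !mulmx1.
  by rewrite !mul0mx mulNmx mulmxN mulmx1 opprK.
split.
  move=> t _ /=; rewrite Rqone /stab -scalar_mx_block mulmx1.
  exact: PPt.
move=> t q _ Hq; have Hs := S3E Hq; split.
  rewrite !trmx_mul trmxK !mulmxA.
  rewrite -(mulmxA _ (Pm t)^T (Pm t)) PtP mulmx1.
  rewrite -(mulmxA (Pm t)) StS // mulmx1 PPt //.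
rewrite !det_mulmx det_tr /stab det_ublock det1 mulr1 detR Hs expr1n mulr1.
exact: detP.
Qed.
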